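(* Let $H:\mathbb R\times\mathbb R\times\Omega\to\mathbb R$ satisfy (H1)–(H6) described in the context, fix $\omega\in\Omega$ and $\mu>\tilde A(\omega)$. Let $u\in USC(\mathbb R\setminus\{0\})$ be a viscosity sub-solution and $v\in LSC(\mathbb R\setminus\{0\})$ a viscosity super-solution of the problem $$H(Dw,y,\omega)=\mu\ \ (y\in\mathbb R\setminus\{0\}),\qquad w(0)=0,$$ and assume $\liminf_{|y|\to\infty}|y|^{-1}v(y,\omega)>0$. Then $u(\cdot,\omega)\le v(\cdot,\omega)$ in $\mathbb R\setminus\{0\}$.
   Context: $H:\mathbb R\times\mathbb R\times\Omega\to\mathbb R$, $(p,y,\omega)\mapsto H(p,y,\omega)$. (H1) $H$ is Lipschitz in $p$ uniformly in $(y,\omega)$. (H2) There are $c_0,C_0,\gamma>0$ with $-c_0|p+\gamma|\le H(p,y,\omega)\le C_0|p+\gamma|$. (H3) $\lim_{|p|\to\infty}\inf_{(y,\omega)}H(p,y,\omega)=+\infty$. (H4) There is a modulus $w$ with $|H(p,y,\omega)-H(p,x,\omega)|\le w(|x-y|(1+|p|))$. (H5) $p\mapsto H(p,y,\omega)$ is convex. (H6) $H(p,y,\omega)\ge H(0,y,\omega)$. $\tilde A(\omega)=\inf\{\mu:\ \exists v$ globally Lipschitz with $H(Dv,y,\omega)\le\mu$ in $\mathbb R$ in the viscosity sense$\}$. Being a sub-solution (resp. super-solution) of the problem includes the boundary condition $u(0)\le 0$ (resp. $v(0)\ge0$). *)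

(* Defs.v *)
From Stdlib Require Import Reals.
From Coquelicot Require Import Coquelicot.
Open Scope R_scope.

Section Defs.
Context {Omega : Type}.
Implicit Types (H : R -> R -> Omega -> R).

Definition H1 H : Prop :=
  exists L : R, forall p q y w, Rabs (H p y w - H q y w) <= L * Rabs (p - q).

Definition H2 H : Prop :=
  exists c0 C0 gamma : R, 0 < c0 /\ 0 < C0 /\ 0 < gamma /\
    forall p y w, - c0 * Rabs (p + gamma) <= H p y w /\ H p y w <= C0 * Rabs (p + gamma).

Definition H3 H : Prop :=
  forall M : R, exists Rp : R, forall p, Rp < Rabs p -> forall y w, M <= H p y w.

Definition modulus (m : R -> R) : Prop :=
  (forall r, 0 <= r -> 0 <= m r) /\
  (forall r s, 0 <= r -> r <= s -> m r <= m s) /\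
  (forall eps, 0 < eps -> exists d, 0 < d /\ forall r, 0 <= r < d -> m r < eps).

Definition H4 H : Prop :=
  exists m : R -> R, modulus m /\
    forall p x y w, Rabs (H p y w - H p x w) <= m (Rabs (x - y) * (1 + Rabs p)).

Definition H5 H : Prop :=
  forall y w p q t, 0 <= t <= 1 ->
    H (t * p + (1 - t) * q) y w <= t * H p y w + (1 - t) * H q y w.

Definition H6 H : Prop := forall p y w, H 0 y w <= H p y w.

Definition C1 (phi : R -> R) : Prop :=
  forall x, ex_derive phi x /\ continuous (Derive phi) x.

Definition local_max (f : R -> R) (x : R) : Prop :=
  exists r, 0 < r /\ forall y, Rabs (y - x) < r -> f y <= f x.
Definition local_min (f : R -> R) (x : R) : Prop :=
  exists r, 0 < r /\ forall y, Rabs (y - x) < r -> f x <= f y.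

Definition visc_sub_on (U : R -> Prop) H (w : Omega) (mu : R) (u : R -> R) : Prop :=
  forall phi x, C1 phi -> U x -> local_max (fun y => u y - phi y) x ->
    H (Derive phi x) x w <= mu.
Definition visc_super_on (U : R -> Prop) H (w : Omega) (mu : R) (v : R -> R) : Prop :=
  forall phi x, C1 phi -> U x -> local_min (fun y => v y - phi y) x ->
    mu <= H (Derive phi x) x w.

Definition punctured (x : R) : Prop := x <> 0.

Definition subsolution H w mu (u : R -> R) : Prop :=
  visc_sub_on punctured H w mu u /\ u 0 <= 0.
Definition supersolution H w mu (v : R -> R) : Prop :=
  visc_super_on punctured H w mu v /\ 0 <= v 0.

Definition usc_at (u : R -> R) (x : R) : Prop :=
  forall eps, 0 < eps -> exists d, 0 < d /\ forall y, Rabs (y - x) < d -> u y < u x + eps.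
Definition lsc_at (v : R -> R) (x : R) : Prop :=
  forall eps, 0 < eps -> exists d, 0 < d /\ forall y, Rabs (y - x) < d -> v x - eps < v y.

Definition globally_lipschitz (f : R -> R) : Prop :=
  exists L, forall x y, Rabs (f x - f y) <= L * Rabs (x - y).

Definition Atilde_set H (w : Omega) (mu : R) : Prop :=
  exists f : R -> R, globally_lipschitz f /\ visc_sub_on (fun _ => True) H w mu f.

Definition Atilde H (w : Omega) : Rbar := Glb_Rbar (Atilde_set H w).

Definition liminf_growth_pos (v : R -> R) : Prop :=
  exists c, 0 < c /\ exists Ry, forall y, Ry < Rabs y -> c <= v y / Rabs y.

End Defs.

(* Main.v *)
Require Import Defs.
From Stdlib Require Import Reals.
From Coquelicot Require Import Coquelicot.
From Stdlib Require Import Lra Lia Psatz ClassicalEpsilon Classical.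
Open Scope R_scope.

Lemma BW_in (x : nat -> R) a b : (forall n, a <= x n <= b) ->
  exists l, a <= l <= b /\ forall d N, 0 < d -> exists p, (N <= p)%nat /\ Rabs (x p - l) < d.
Proof.
  intros Hx.
  destruct (Bolzano_Weierstrass x _ (compact_P3 a b) Hx) as [l Hl].
  assert (Hn : forall d N, 0 < d -> exists p, (N <= p)%nat /\ Rabs (x p - l) < d).
  { intros d N Hd.
    destruct (Hl (disc l (mkposreal d Hd)) N) as [p [Hp1 Hp2]].
    - exists (mkposreal d Hd). intros z Hz; exact Hz.
    - exists p; split; auto. }
  exists l; split; [|exact Hn].
  split.
  - destruct (Rle_or_lt a l) as [h|h]; auto.
    destruct (Hn (a - l) O) as [p [_ Hp]]; [lra|].
    specialize (Hx p). apply Rabs_def2 in Hp. lra.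
  - destruct (Rle_or_lt l b) as [h|h]; auto.
    destruct (Hn (l - b) O) as [p [_ Hp]]; [lra|].
    specialize (Hx p). apply Rabs_def2 in Hp. lra.
Qed.

Lemma usc_max f a b : a <= b -> (forall x, usc_at f x) ->
  exists m, a <= m <= b /\ forall x, a <= x <= b -> f x <= f m.
Proof.
  intros Hab Hu.
  assert (Hb : exists M, forall x, a <= x <= b -> f x <= M).
  { apply NNPP; intro Hn.
    assert (Hex : forall n : nat, exists x, a <= x <= b /\ INR n < f x).
    { intro n. apply NNPP; intro Hn2. apply Hn. exists (INR n).
      intros x Hx. apply Rnot_lt_le. intro Hc. apply Hn2. exists x; auto. }
    set (xs := fun n => proj1_sig (constructive_indefinite_description _ (Hex n))).
    assert (Hxs : forall n, a <= xs n <= b /\ INR n < f (xs n)).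
    { intro n. unfold xs. destruct (constructive_indefinite_description _ (Hex n)); auto. }
    destruct (BW_in xs a b (fun n => proj1 (Hxs n))) as [l [Hl1 Hl2]].
    destruct (Hu l 1 ltac:(lra)) as [d [Hd Hd2]].
    destruct (INR_unbounded (f l + 1)) as [N HN].
    destruct (Hl2 d N Hd) as [p [Hp1 Hp2]].
    specialize (Hd2 _ Hp2). destruct (Hxs p) as [_ Hp3].
    apply le_INR in Hp1. lra. }
  destruct Hb as [M0 HM0].
  set (E := fun z => exists x, a <= x <= b /\ z = f x).
  destruct (completeness E) as [M [HM1 HM2]].
  { exists M0. intros z [x [Hx ->]]. auto. }
  { exists (f a). exists a. split; [lra|auto]. }
  assert (Hex : forall n : nat, exists x, a <= x <= b /\ M - / (INR n + 1) < f x).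
  { intro n. apply NNPP; intro Hn2.
    assert (Hpos : 0 < / (INR n + 1)).
    { apply Rinv_0_lt_compat. pose proof (pos_INR n). lra. }
    assert (M <= M - / (INR n + 1)).
    { apply HM2. intros z [x [Hx ->]]. apply Rnot_lt_le. intro Hc. apply Hn2.
      exists x; auto. }
    lra. }
  set (xs := fun n => proj1_sig (constructive_indefinite_description _ (Hex n))).
  assert (Hxs : forall n, a <= xs n <= b /\ M - / (INR n + 1) < f (xs n)).
  { intro n. unfold xs. destruct (constructive_indefinite_description _ (Hex n)); auto. }
  destruct (BW_in xs a b (fun n => proj1 (Hxs n))) as [l [Hl1 Hl2]].
  assert (Hfl : M <= f l).
  { apply Rnot_lt_le; intro Hc.
    destruct (Hu l ((M - f l) / 2) ltac:(lra)) as [d [Hd Hd2]].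
    destruct (INR_unbounded (2 / (M - f l))) as [N HN].
    destruct (Hl2 d N Hd) as [p [Hp1 Hp2]].
    specialize (Hd2 _ Hp2). destruct (Hxs p) as [_ Hp3].
    apply le_INR in Hp1.
    assert (H1 : / (INR p + 1) < (M - f l) / 2).
    { assert (0 < INR p + 1) by (pose proof (pos_INR p); lra).
      apply (Rmult_lt_reg_l (INR p + 1)); auto.
      rewrite Rinv_r by lra.
      assert (2 / (M - f l) * ((M - f l)/2) = 1) by (field; lra).
      assert (2 / (M - f l) < INR p + 1) by lra.
      assert (0 < (M - f l) / 2) by lra.
      nra. }
    lra. }
  exists l; split; auto.
  intros x Hx. assert (f x <= M) by (apply HM1; exists x; auto). lra.
Qed.

Lemma lsc_min f a b : a <= b -> (forall x, lsc_at f x) ->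
  exists m, a <= m <= b /\ forall x, a <= x <= b -> f m <= f x.
Proof.
  intros Hab Hl.
  destruct (usc_max (fun x => - f x) a b Hab) as [m [Hm1 Hm2]].
  - intros x eps Heps. destruct (Hl x eps Heps) as [d [Hd Hd2]].
    exists d; split; auto. intros y Hy. specialize (Hd2 y Hy). lra.
  - exists m; split; auto. intros x Hx. specialize (Hm2 x Hx). lra.
Qed.

Lemma cont_eps (g : R -> R) x : continuous g x ->
  forall eps, 0 < eps -> exists d, 0 < d /\ forall y, Rabs (y - x) < d -> Rabs (g y - g x) < eps.
Proof.
  intros Hc eps Heps.
  apply continuity_pt_filterlim in Hc.
  destruct (Hc eps Heps) as [d [Hd Hd2]].
  exists d; split; auto. intros y Hy.
  destruct (Req_dec y x) as [->|Hne].
  - rewrite Rminus_eq_0, Rabs_R0; auto.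
  - apply (Hd2 y). split. { split; [exact I| auto]. } exact Hy.
Qed.

Lemma usc_minus u g x : usc_at u x -> continuous g x -> usc_at (fun y => u y - g y) x.
Proof.
  intros Hu Hg eps Heps.
  destruct (Hu (eps/2) ltac:(lra)) as [d1 [Hd1 H1]].
  destruct (cont_eps g x Hg (eps/2) ltac:(lra)) as [d2 [Hd2 H2]].
  exists (Rmin d1 d2); split; [apply Rmin_pos; auto|].
  intros y Hy. specialize (H1 y (Rlt_le_trans _ _ _ Hy (Rmin_l _ _))).
  specialize (H2 y (Rlt_le_trans _ _ _ Hy (Rmin_r _ _))).
  apply Rabs_def2 in H2. lra.
Qed.

Lemma lsc_minus v g x : lsc_at v x -> continuous g x -> lsc_at (fun y => v y - g y) x.
Proof.
  intros Hu Hg eps Heps.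
  destruct (Hu (eps/2) ltac:(lra)) as [d1 [Hd1 H1]].
  destruct (cont_eps g x Hg (eps/2) ltac:(lra)) as [d2 [Hd2 H2]].
  exists (Rmin d1 d2); split; [apply Rmin_pos; auto|].
  intros y Hy. specialize (H1 y (Rlt_le_trans _ _ _ Hy (Rmin_l _ _))).
  specialize (H2 y (Rlt_le_trans _ _ _ Hy (Rmin_r _ _))).
  apply Rabs_def2 in H2. lra.
Qed.

Lemma C1_of (f f' : R -> R) : (forall x, is_derive f x (f' x)) -> (forall x, continuous f' x) ->
  Defs.C1 f /\ forall x, Derive f x = f' x.
Proof.
  intros Hd Hc.
  assert (HD : forall x, Derive f x = f' x) by (intro x; apply is_derive_unique; auto).
  split; auto.
  intro x; split.
  - exists (f' x); auto.
  - apply (continuous_ext f'); auto.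
Qed.

Lemma tf_exp s A B q : Defs.C1 (fun y => s * y + A * exp (B * (y - q))) /\
  forall x, Derive (fun y => s * y + A * exp (B * (y - q))) x = s + A * B * exp (B * (x - q)).
Proof.
  apply C1_of.
  - intro x. auto_derive; auto. unfold Rminus; ring.
  - intro x. apply (@ex_derive_continuous R_AbsRing R_NormedModule). auto_derive; auto.
Qed.

Lemma tf_sq x0 dl : dl <> 0 -> Defs.C1 (fun y => (y - x0)^2 / dl) /\
  forall x, Derive (fun y => (y - x0)^2 / dl) x = 2 * (x - x0) / dl.
Proof.
  intro Hdl. apply C1_of.
  - intro x. auto_derive; auto. field; auto.
  - intro x. apply (@ex_derive_continuous R_AbsRing R_NormedModule). auto_derive; auto.
Qed.

Lemma tf_atan e K x0 w : 0 < w -> Defs.C1 (fun y => e * y + K * atan ((y - x0) / w)) /\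
  forall x, Derive (fun y => e * y + K * atan ((y - x0) / w)) x = e + K / w / (1 + ((x - x0)/w)^2).
Proof.
  intro Hw. apply C1_of.
  - intro x.
    assert (Ha : is_derive (fun y => atan ((y - x0) / w)) x (/ w * / (1 + ((x - x0)/w)^2))).
    { apply (is_derive_comp atan (fun y => (y - x0)/w)).
      - apply is_derive_Reals. apply derivable_pt_lim_atan.
      - auto_derive; auto. field; lra. }
    apply (is_derive_plus (fun y => e * y) (fun y => K * atan ((y - x0)/w))).
    + auto_derive; auto. ring.
    + replace (K / w / (1 + ((x - x0) / w) ^ 2)) with (K * (/ w * / (1 + ((x - x0) / w) ^ 2))).
      * apply is_derive_scal; auto.
      * field. split; [lra|]. pose proof (pow2_ge_0 (x - x0)). pose proof (pow2_gt_0 w). nra.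
  - intro x. apply (@ex_derive_continuous R_AbsRing R_NormedModule). auto_derive.
    pose proof (Rle_0_sqr ((x + - x0) * / w)). unfold Rsqr in *. lra.
Qed.

Lemma C1_cont g x : Defs.C1 g -> continuous g x.
Proof. intro Hg. apply (@ex_derive_continuous R_AbsRing R_NormedModule). apply (Hg x). Qed.

Lemma Hmono {Omega} (H : R -> R -> Omega -> R) w : H5 H -> H6 H ->
  forall s t y, 0 <= s -> 0 <= t -> H s y w <= H (s + t) y w.
Proof.
  intros h5 h6 s t y Hs Ht.
  destruct (Req_dec (s + t) 0) as [Hz|Hz].
  - assert (s = 0) by lra. assert (t = 0) by lra. subst. rewrite Rplus_0_r. lra.
  - set (l := s / (s + t)).
    assert (Hl : 0 <= l <= 1).
    { unfold l. split. apply Rdiv_le_0_compat; lra.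
      apply (Rmult_le_reg_r (s + t)); [lra|]. unfold Rdiv. rewrite Rmult_assoc, Rinv_l by lra. lra. }
    pose proof (h5 y w (s + t) 0 l Hl) as Hc.
    replace (l * (s + t) + (1 - l) * 0) with s in Hc by (unfold l; field; lra).
    pose proof (h6 (s + t) y w). nra.
Qed.

Lemma sub_incr {Omega} (H : R -> R -> Omega -> R) w mu u :
  visc_sub_on punctured H w mu u -> (forall x, usc_at u x) -> H5 H -> H6 H ->
  forall s p q Z, 0 <= s -> 0 <= p -> p < q -> q < Z ->
  (forall y, p < y < Z -> mu < H s y w) -> u q - s * q <= u p - s * p.
Proof.
  intros hsub husc h5 h6 s p q Z Hs Hp Hpq HqZ HH.
  apply Rnot_lt_le; intro Hc.
  set (D := (u q - s * q) - (u p - s * p)).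
  set (A := D / 2).
  assert (HA : 0 < A) by (unfold A, D; lra).
  set (fZ := u Z - s * Z). set (fq := u q - s * q).
  set (B := (Rabs (fZ - fq) / A + 1) / (Z - q)).
  assert (HB : 0 < B).
  { unfold B. apply Rdiv_lt_0_compat; [|lra].
    pose proof (Rabs_pos (fZ - fq)). assert (0 <= Rabs (fZ - fq) / A) by (apply Rdiv_le_0_compat; lra). lra. }
  destruct (tf_exp s A B q) as [Hphi HD].
  set (phi := fun y => s * y + A * exp (B * (y - q))) in *.
  destruct (usc_max (fun y => u y - phi y) p Z ltac:(lra)) as [m [Hm1 Hm2]].
  { intro x. apply usc_minus; auto. apply C1_cont; auto. }
  assert (Fq : u q - phi q = fq - A).
  { unfold phi, fq. replace (B * (q - q)) with 0 by ring. rewrite exp_0. ring. }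
  assert (Fp : u p - phi p < u q - phi q).
  { rewrite Fq. unfold phi, fq. pose proof (exp_pos (B * (p - q))).
    assert (0 < A * exp (B * (p - q))) by (apply Rmult_lt_0_compat; auto).
    unfold A, D in *. lra. }
  assert (FZ : u Z - phi Z < u q - phi q).
  { rewrite Fq. unfold phi.
    assert (Hx : B * (Z - q) <> 0) by (apply Rmult_integral_contrapositive; split; lra).
    pose proof (exp_ineq1 _ Hx) as He.
    assert (HBZ : B * (Z - q) = Rabs (fZ - fq) / A + 1) by (unfold B; field; lra).
    assert (He' : 1 + (Rabs (fZ - fq) / A + 1) < exp (B * (Z - q))) by lra.
    assert (Ae : A * (1 + (Rabs (fZ - fq) / A + 1)) < A * exp (B * (Z - q))) by (apply Rmult_lt_compat_l; auto).
    replace (A * (1 + (Rabs (fZ - fq) / A + 1))) with (2 * A + Rabs (fZ - fq)) in Ae by (field; lra).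
    pose proof (Rle_abs (fZ - fq)). unfold fZ, fq in *. lra. }
  assert (Hmq := Hm2 q ltac:(lra)).
  assert (Hmi : p < m < Z).
  { split.
    - destruct (Rle_lt_or_eq_dec p m (proj1 Hm1)); auto. subst m. lra.
    - destruct (Rle_lt_or_eq_dec m Z (proj2 Hm1)); auto. subst m. lra. }
  assert (Hloc : local_max (fun y => u y - phi y) m).
  { exists (Rmin (m - p) (Z - m)). split; [apply Rmin_pos; lra|].
    intros y Hy. apply Hm2.
    pose proof (Rmin_l (m - p) (Z - m)). pose proof (Rmin_r (m - p) (Z - m)).
    apply Rabs_def2 in Hy. lra. }
  pose proof (hsub phi m Hphi ltac:(unfold punctured; lra) Hloc) as Hs1.
  rewrite HD in Hs1.
  assert (0 <= A * B * exp (B * (m - q))).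
  { pose proof (exp_pos (B * (m - q))). apply Rlt_le. apply Rmult_lt_0_compat; auto. apply Rmult_lt_0_compat; auto. }
  pose proof (Hmono H w h5 h6 s (A * B * exp (B * (m - q))) m Hs H0).
  pose proof (HH m Hmi). lra.
Qed.

Lemma super_incr {Omega} (H : R -> R -> Omega -> R) w mu v :
  visc_super_on punctured H w mu v -> (forall x, lsc_at v x) ->
  forall g p q Z, Defs.C1 g -> 0 <= p -> p < q -> q < Z ->
  (forall y, p < y < Z -> H (Derive g y) y w < mu) ->
  v p - g p <= v Z - g Z -> v p - g p <= v q - g q.
Proof.
  intros hsup hlsc g p q Z Hg Hp Hpq HqZ HH HZ.
  apply Rnot_lt_le; intro Hc.
  destruct (lsc_min (fun y => v y - g y) p Z ltac:(lra)) as [m [Hm1 Hm2]].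
  { intro x. apply lsc_minus; auto. apply C1_cont; auto. }
  assert (Hmq := Hm2 q ltac:(lra)).
  assert (Hmi : p < m < Z).
  { split.
    - destruct (Rle_lt_or_eq_dec p m (proj1 Hm1)); auto. subst m. lra.
    - destruct (Rle_lt_or_eq_dec m Z (proj2 Hm1)); auto. subst m. lra. }
  assert (Hloc : local_min (fun y => v y - g y) m).
  { exists (Rmin (m - p) (Z - m)). split; [apply Rmin_pos; lra|].
    intros y Hy. apply Hm2.
    pose proof (Rmin_l (m - p) (Z - m)). pose proof (Rmin_r (m - p) (Z - m)).
    apply Rabs_def2 in Hy. lra. }
  pose proof (hsup g m Hg ltac:(unfold punctured; lra) Hloc).
  pose proof (HH m Hmi). lra.
Qed.

Lemma H0_bound {Omega} (H : R -> R -> Omega -> R) w mu1 m f :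
  H6 H -> modulus m ->
  (forall p x y, Rabs (H p y w - H p x w) <= m (Rabs (x - y) * (1 + Rabs p))) ->
  globally_lipschitz f -> visc_sub_on (fun _ => True) H w mu1 f ->
  forall x, H 0 x w <= mu1.
Proof.
  intros h6 [hm1 [hm2 hm3]] hH4 [Lf HLf] hsub x.
  apply le_epsilon. intros eta Heta.
  destruct (hm3 eta Heta) as [d [Hd Hd2]].
  set (K := Rabs Lf + 1). assert (HK : 0 < K) by (unfold K; pose proof (Rabs_pos Lf); lra).
  set (r := d / 2). assert (Hr : 0 < r) by (unfold r; lra).
  set (dl := r / (2 * K)). assert (Hdl : 0 < dl) by (unfold dl; apply Rdiv_lt_0_compat; lra).
  assert (HLK : forall a b, Rabs (f a - f b) <= K * Rabs (a - b)).
  { intros a b. eapply Rle_trans; [apply HLf|]. apply Rmult_le_compat_r; [apply Rabs_pos|].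
    unfold K. pose proof (Rle_abs Lf). lra. }
  destruct (tf_sq x dl ltac:(lra)) as [Hphi HD].
  set (phi := fun y => (y - x)^2 / dl) in *.
  destruct (usc_max (fun y => f y - phi y) (x - r) (x + r) ltac:(lra)) as [z [Hz1 Hz2]].
  { intro y. apply usc_minus; [|apply C1_cont; auto].
    intros eps Heps. exists (eps / K). split; [apply Rdiv_lt_0_compat; lra|].
    intros y' Hy'. pose proof (HLK y' y). pose proof (Rle_abs (f y' - f y)).
    assert (K * Rabs (y' - y) < eps).
    { apply (Rmult_lt_compat_l K) in Hy'; auto. replace (K * (eps / K)) with eps in Hy' by (field; lra). lra. }
    lra. }
  assert (Fx : f x - phi x = f x) by (unfold phi; simpl; field; lra).
  assert (Hend : forall y, Rabs (y - x) = r -> f y - phi y < f x).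
  { intros y Hy. unfold phi.
    assert (Hp : (y - x) ^ 2 = r * r).
    { replace ((y - x) ^ 2) with (Rsqr (y - x)) by (unfold Rsqr; ring).
      rewrite (Rsqr_abs (y - x)), Hy. unfold Rsqr. ring. }
    rewrite Hp. replace (r * r / dl) with (2 * K * r) by (unfold dl; field; repeat split; lra).
    pose proof (HLK y x). rewrite Hy in H0. pose proof (Rle_abs (f y - f x)). assert (0 < K * r) by (apply Rmult_lt_0_compat; lra). lra. }
  assert (Hzi : x - r < z < x + r).
  { pose proof (Hz2 x ltac:(lra)) as Hzx. rewrite Fx in Hzx. split.
    - destruct (Rle_lt_or_eq_dec _ _ (proj1 Hz1)); auto. subst z.
      assert (Rabs (x - r - x) = r) by (replace (x - r - x) with (- r) by ring; rewrite Rabs_Ropp; apply Rabs_right; lra).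
      pose proof (Hend _ H0). lra.
    - destruct (Rle_lt_or_eq_dec _ _ (proj2 Hz1)); auto. subst z.
      assert (Rabs (x + r - x) = r) by (replace (x + r - x) with r by ring; apply Rabs_right; lra).
      pose proof (Hend _ H0). lra. }
  assert (Hloc : local_max (fun y => f y - phi y) z).
  { exists (Rmin (z - (x - r)) (x + r - z)). split; [apply Rmin_pos; lra|].
    intros y Hy. apply Hz2.
    pose proof (Rmin_l (z - (x - r)) (x + r - z)). pose proof (Rmin_r (z - (x - r)) (x + r - z)).
    apply Rabs_def2 in Hy. lra. }
  pose proof (hsub phi z Hphi I Hloc) as Hs.
  pose proof (h6 (Derive phi z) z w).
  pose proof (hH4 0 x z) as H4'.
  rewrite Rabs_R0, Rplus_0_r, Rmult_1_r in H4'.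
  assert (Rabs (x - z) < d).
  { apply Rabs_def1; unfold r in *; lra. }
  pose proof (Hd2 (Rabs (x - z)) (conj (Rabs_pos _) H1)).
  pose proof (Rle_abs (H 0 z w - H 0 x w)). pose proof (Rabs_Ropp (H 0 z w - H 0 x w)). pose proof (Rle_abs (-(H 0 z w - H 0 x w))). lra.
Qed.


Lemma Rabs_le_split a r : Rabs a <= r -> a <= r /\ - r <= a.
Proof. intro h. pose proof (Rle_abs a). pose proof (Rabs_Ropp a). pose proof (Rle_abs (-a)). lra. Qed.

Lemma slope_choice {Omega} (H : R -> R -> Omega -> R) w L mu1 mu M x :
  0 < L -> (forall p q y, Rabs (H p y w - H q y w) <= L * Rabs (p - q)) ->
  mu1 < mu -> H 0 x w <= mu1 -> 0 < M -> mu < H M x w ->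
  exists a, 0 < a /\ a <= M /\ H a x w = mu /\ (mu - mu1) / L <= a.
Proof.
  intros HL HLip Hmu H0 HM HMx.
  destruct (IVT (fun p => H p x w - mu) 0 M) as [a [Ha1 Ha2]]; [| lra | lra | lra |].
  - intro p0. unfold continuity_pt, continue_in, limit1_in, limit_in. intros eps Heps.
    exists (eps / L). split; [apply Rdiv_lt_0_compat; lra|].
    intros p1 [_ Hp1]. simpl in *. unfold R_dist in *.
    replace (H p1 x w - mu - (H p0 x w - mu)) with (H p1 x w - H p0 x w) by ring.
    eapply Rle_lt_trans; [apply HLip|].
    apply (Rmult_lt_compat_l L) in Hp1; auto. replace (L * (eps / L)) with eps in Hp1 by (field; lra). lra.
  - assert (Hlow : (mu - mu1) / L <= a).
    { pose proof (HLip a 0 x) as Hl. rewrite Rminus_0_r in Hl. rewrite (Rabs_right a) in Hl by lra.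
      apply Rabs_le_split in Hl.
      apply (Rmult_le_reg_l L); auto. replace (L * ((mu - mu1) / L)) with (mu - mu1) by (field; lra). lra. }
    assert (0 < (mu - mu1) / L) by (apply Rdiv_lt_0_compat; lra).
    exists a. repeat split; try lra.
Qed.

Lemma convex_up {Omega} (H : R -> R -> Omega -> R) w mu1 mu x a b :
  H5 H -> H 0 x w <= mu1 -> 0 < a -> a < b -> H a x w = mu ->
  mu + (mu - mu1) * (b - a) / a <= H b x w.
Proof.
  intros h5 H0 Ha Hab Hax.
  set (l := a / b).
  assert (Hl : 0 <= l <= 1).
  { unfold l. split. apply Rdiv_le_0_compat; lra.
    apply (Rmult_le_reg_r b); [lra|]. unfold Rdiv. rewrite Rmult_assoc, Rinv_l by lra. lra. }
  pose proof (h5 x w b 0 l Hl) as Hc.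
  replace (l * b + (1 - l) * 0) with a in Hc by (unfold l; field; lra).
  rewrite Hax in Hc.
  assert (Hc2 : mu <= l * H b x w + (1 - l) * mu1) by nra.
  unfold l in Hc2.
  apply (Rmult_le_compat_l (b / a)) in Hc2; [|apply Rdiv_le_0_compat; lra].
  replace (b / a * (a / b * H b x w + (1 - a / b) * mu1)) with (H b x w + (b / a - 1) * mu1) in Hc2 by (field; lra).
  replace (mu + (mu - mu1) * (b - a) / a) with (b / a * mu - (b / a - 1) * mu1) by (field; lra).
  lra.
Qed.

Lemma convex_down {Omega} (H : R -> R -> Omega -> R) w mu1 mu x a b :
  H5 H -> H 0 x w <= mu1 -> 0 <= b -> b < a -> H a x w = mu ->
  H b x w <= mu - (mu - mu1) * (a - b) / a.
Proof.
  intros h5 H0 Hb Hab Hax.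
  set (l := b / a).
  assert (Hl : 0 <= l <= 1).
  { unfold l. split. apply Rdiv_le_0_compat; lra.
    apply (Rmult_le_reg_r a); [lra|]. unfold Rdiv. rewrite Rmult_assoc, Rinv_l by lra. lra. }
  pose proof (h5 x w a 0 l Hl) as Hc.
  replace (l * a + (1 - l) * 0) with b in Hc by (unfold l; field; lra).
  rewrite Hax in Hc.
  assert (Hc2 : H b x w <= l * mu + (1 - l) * mu1) by nra.
  unfold l in Hc2.
  replace (mu - (mu - mu1) * (a - b) / a) with (b / a * mu + (1 - b / a) * mu1) by (field; lra).
  lra.
Qed.

Lemma step {Omega} (H : R -> R -> Omega -> R) w L m mu1 mu u v c R0
  (HL : 0 < L) (HLip : forall p q y, Rabs (H p y w - H q y w) <= L * Rabs (p - q))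
  (h5 : H5 H) (h6 : H6 H) (hm3 : forall eps, 0 < eps -> exists d, 0 < d /\ forall r, 0 <= r < d -> m r < eps)
  (hH4 : forall p x y, Rabs (H p y w - H p x w) <= m (Rabs (x - y) * (1 + Rabs p)))
  (Hmu : mu1 < mu) (H0 : forall y, H 0 y w <= mu1)
  (husc : forall x, usc_at u x) (hlsc : forall x, lsc_at v x)
  (hsub : visc_sub_on punctured H w mu u)
  (hsup : visc_super_on punctured H w mu v)
  (Hc : 0 < c) (HR0 : forall y, R0 < y -> c * y <= v y)
  M (HM : 0 < M) (HMx : forall x, mu < H M x w)
  e' (He1 : 0 < e') (He2 : e' <= 1) (He3 : e' <= (mu - mu1) / L) :
  exists h0, 0 < h0 /\ forall h x, 0 < h -> h <= h0 -> 0 <= x ->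
    u (x + h) - v (x + h) <= u x - v x + 2 * e' * h.
Proof.
  set (kap := (mu - mu1) * e' / (2 * M)).
  assert (Hkap : 0 < kap) by (unfold kap; apply Rdiv_lt_0_compat; nra).
  destruct (hm3 (kap / 2) ltac:(lra)) as [d [Hd Hd2]].
  set (r0 := d / (M + 2)).
  assert (Hr0 : 0 < r0) by (unfold r0; apply Rdiv_lt_0_compat; lra).
  assert (HP : forall p x z, Rabs p <= M + 1 -> Rabs (z - x) < r0 -> Rabs (H p z w - H p x w) < kap / 2).
  { intros p x z Hp Hz. eapply Rle_lt_trans; [apply hH4|]. apply Hd2.
    pose proof (Rabs_pos p). pose proof (Rabs_pos (x - z)).
    rewrite Rabs_minus_sym in Hz.
    split; [nra|].
    assert (Rabs (x - z) * (1 + Rabs p) <= Rabs (x - z) * (M + 2)) by nra.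
    assert (Rabs (x - z) * (M + 2) < r0 * (M + 2)) by nra.
    replace (r0 * (M + 2)) with d in * by (unfold r0; field; lra). lra. }
  set (q0 := (mu - mu1) / L).
  assert (Hq0 : 0 < q0) by (unfold q0; apply Rdiv_lt_0_compat; lra).
  set (eps0 := Rmin c q0 / 4).
  assert (Heps0 : 0 < eps0 /\ eps0 < c /\ eps0 <= q0 / 4).
  { unfold eps0. pose proof (Rmin_l c q0). pose proof (Rmin_r c q0).
    assert (0 < Rmin c q0) by (apply Rmin_pos; lra). lra. }
  assert (HLeps : L * eps0 <= (mu - mu1) / 4).
  { replace ((mu - mu1) / 4) with (L * (q0 / 4)) by (unfold q0; field; lra). nra. }
  set (lam0 := (mu - mu1) / (4 * L * (M + 1))).
  assert (Hlam0 : 0 < lam0) by (unfold lam0; apply Rdiv_lt_0_compat; nra).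
  set (lam1 := Rmin lam0 1).
  assert (Hlam1 : 0 < lam1 /\ lam1 <= lam0 /\ lam1 <= 1).
  { unfold lam1. split; [apply Rmin_pos; lra|]. split; [apply Rmin_l | apply Rmin_r]. }
  set (wd := r0 * lam1).
  assert (Hwd : 0 < wd) by (unfold wd; nra).
  set (t0 := Rmin 1 (e' / (M + 1))).
  assert (Ht0 : 0 < t0 /\ t0 <= 1 /\ t0 <= e' / (M + 1)).
  { unfold t0. split; [apply Rmin_pos; [lra| apply Rdiv_lt_0_compat; lra]|].
    split; [apply Rmin_l | apply Rmin_r]. }
  exists (Rmin (r0 / 2) (wd * t0)).
  split; [apply Rmin_pos; nra|].
  intros h x Hh Hh0 Hx.
  assert (Hhr : h <= r0 / 2) by (pose proof (Rmin_l (r0 / 2) (wd * t0)); lra).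
  assert (Hhw : h <= wd * t0) by (pose proof (Rmin_r (r0 / 2) (wd * t0)); lra).
  destruct (slope_choice H w L mu1 mu M x HL HLip Hmu (H0 x) HM (HMx x)) as [a [Ha0 [HaM [Hax Halow]]]].
  fold q0 in Halow.
  set (s := a + e' / 2). set (sg := a - e' / 2).
  fold q0 in He3. assert (Hsg : q0 / 2 <= sg) by (unfold sg; lra).
  assert (Hsx : mu + kap <= H s x w).
  { pose proof (convex_up H w mu1 mu x a s h5 (H0 x) Ha0 ltac:(unfold s; lra) Hax) as Hu.
    assert (kap <= (mu - mu1) * (s - a) / a).
    { replace kap with ((mu - mu1) * (e' / 2) * / M) by (unfold kap; field; lra).
      replace ((mu - mu1) * (s - a) / a) with ((mu - mu1) * (e' / 2) * / a) by (unfold s; field; lra).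
      apply Rmult_le_compat_l; [nra|]. apply Rinv_le_contravar; lra. }
    lra. }
  assert (Hsgx : H sg x w <= mu - kap).
  { pose proof (convex_down H w mu1 mu x a sg h5 (H0 x) ltac:(lra) ltac:(unfold sg; lra) Hax) as Hu.
    assert (kap <= (mu - mu1) * (a - sg) / a).
    { replace kap with ((mu - mu1) * (e' / 2) * / M) by (unfold kap; field; lra).
      replace ((mu - mu1) * (a - sg) / a) with ((mu - mu1) * (e' / 2) * / a) by (unfold sg; field; lra).
      apply Rmult_le_compat_l; [nra|]. apply Rinv_le_contravar; lra. }
    lra. }
  assert (Hu : u (x + h) - s * (x + h) <= u x - s * x).
  { apply (sub_incr H w mu u hsub husc h5 h6 s x (x + h) (x + 2 * h)); try lra.
    - unfold s; lra.
    - intros z Hz.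
      assert (Rabs s <= M + 1) by (rewrite Rabs_right; unfold s; lra).
      assert (Rabs (z - x) < r0) by (rewrite Rabs_right; lra).
      pose proof (HP s x z H1 H2) as Hp. apply Rlt_le, Rabs_le_split in Hp. lra.
      }

  set (K := (sg - eps0) * wd).
  assert (HK : 0 < K) by (unfold K; apply Rmult_lt_0_compat; lra).
  destruct (tf_atan eps0 K x wd Hwd) as [Hg HgD].
  set (g := fun y => eps0 * y + K * atan ((y - x) / wd)) in *.
  assert (HgD2 : forall z, Derive g z = / (1 + ((z - x) / wd) ^ 2) * sg + (1 - / (1 + ((z - x) / wd) ^ 2)) * eps0).
  { intro z. rewrite HgD. unfold K.
    assert (0 <= ((z - x) / wd) ^ 2) by apply pow2_ge_0.
    field. split; [lra|]. pose proof (pow2_ge_0 (z - x)). pose proof (pow2_gt_0 wd). nra. }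
  assert (Hrho : forall z, 0 < / (1 + ((z - x) / wd) ^ 2) <= 1).
  { intro z. assert (0 <= ((z - x) / wd) ^ 2) by apply pow2_ge_0.
    split. apply Rinv_0_lt_compat; lra.
    rewrite <- Rinv_1. apply Rinv_le_contravar; lra. }
  assert (Heps_b : forall z, H eps0 z w <= mu1 + (mu - mu1) / 4).
  { intro z. pose proof (HLip eps0 0 z) as Hl. rewrite Rminus_0_r, (Rabs_right eps0) in Hl by lra.
    apply Rabs_le_split in Hl. pose proof (H0 z). lra. }
  assert (Hadm : forall z, H (Derive g z) z w < mu).
  { intro z. rewrite HgD2.
    destruct (Hrho z) as [Hr1 Hr2].
    set (rho := / (1 + ((z - x) / wd) ^ 2)) in *.
    pose proof (h5 z w sg eps0 rho ltac:(lra)) as Hcv.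
    pose proof (Heps_b z) as He.
    destruct (Rlt_or_le (Rabs (z - x)) r0) as [Hnear|Hfar].
    - assert (Hsgz : H sg z w < mu).
      { assert (Rabs sg <= M + 1) by (rewrite Rabs_right; unfold sg; lra).
        pose proof (HP sg x z H1 Hnear) as Hp. apply Rlt_le, Rabs_le_split in Hp. lra. }
      assert (rho * H sg z w < rho * mu) by (apply Rmult_lt_compat_l; lra).
      assert ((1 - rho) * H eps0 z w <= (1 - rho) * mu) by (apply Rmult_le_compat_l; lra).
      lra.
    - assert (Hsgz : H sg z w <= mu1 + L * (M + 1)).
      { pose proof (HLip sg 0 z) as Hl. rewrite Rminus_0_r, (Rabs_right sg) in Hl by lra.
        apply Rabs_le_split in Hl. pose proof (H0 z).
        assert (L * sg <= L * (M + 1)) by (apply Rmult_le_compat_l; unfold sg; lra). lra. }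
      assert (Hrl : rho <= lam0).
      { set (X2 := ((z - x) / wd) ^ 2) in *.
        assert (HX : 1 <= lam1 * lam1 * X2).
        { unfold X2, wd.
          replace (lam1 * lam1 * ((z - x) / (r0 * lam1)) ^ 2) with ((z - x) ^ 2 / (r0 * r0)) by (field; lra).
          assert (r0 * r0 <= (z - x) ^ 2).
          { replace ((z - x) ^ 2) with (Rabs (z - x) * Rabs (z - x)).
            - apply Rmult_le_compat; lra.
            - rewrite <- Rabs_mult. rewrite Rabs_right; [ring|]. apply Rle_ge.
              replace ((z - x) * (z - x)) with ((z - x) ^ 2) by ring. apply pow2_ge_0. }
          apply (Rmult_le_reg_r (r0 * r0)); [nra|].
          unfold Rdiv. rewrite Rmult_assoc, Rinv_l by nra. lra. }
        assert (HX2 : 0 <= X2) by (unfold X2; apply pow2_ge_0).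
        assert (Hl2 : 1 <= lam0 * (1 + X2)).
        { assert (lam1 * lam1 * X2 <= lam1 * X2) by (apply Rmult_le_compat_r; nra).
          assert (lam1 * X2 <= lam0 * X2) by (apply Rmult_le_compat_r; lra). nra. }
        unfold rho. apply (Rmult_le_reg_r (1 + X2)); [lra|].
        rewrite Rinv_l by lra. lra. }
      assert (HlL : lam0 * (L * (M + 1)) = (mu - mu1) / 4) by (unfold lam0; field; lra).
      assert (rho * H sg z w <= rho * (mu1 + L * (M + 1))) by (apply Rmult_le_compat_l; lra).
      assert ((1 - rho) * H eps0 z w <= (1 - rho) * (mu1 + (mu - mu1) / 4)) by (apply Rmult_le_compat_l; lra).
      assert (rho * (L * (M + 1)) <= lam0 * (L * (M + 1))) by (apply Rmult_le_compat_r; nra).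
      assert ((1 - rho) * ((mu - mu1) / 4) <= (mu - mu1) / 4) by nra.
      nra. }
  set (Z := Rmax (Rmax (x + h + 1) (R0 + 1)) ((v x - g x + K * (PI / 2)) / (c - eps0) + 1)).
  assert (HZ1 : x + h < Z /\ R0 < Z /\ v x - g x + K * (PI / 2) < (c - eps0) * Z).
  { pose proof (Rmax_l (Rmax (x + h + 1) (R0 + 1)) ((v x - g x + K * (PI / 2)) / (c - eps0) + 1)).
    pose proof (Rmax_r (Rmax (x + h + 1) (R0 + 1)) ((v x - g x + K * (PI / 2)) / (c - eps0) + 1)).
    pose proof (Rmax_l (x + h + 1) (R0 + 1)). pose proof (Rmax_r (x + h + 1) (R0 + 1)).
    fold Z in H1, H2. split; [lra|]. split; [lra|].
    assert (Hce : 0 < c - eps0) by lra.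
    assert ((v x - g x + K * (PI / 2)) / (c - eps0) < Z) by lra.
    apply (Rmult_lt_compat_l (c - eps0)) in H5; [|lra].
    replace ((c - eps0) * ((v x - g x + K * (PI / 2)) / (c - eps0))) with (v x - g x + K * (PI / 2)) in H5 by (field; lra).
    lra. }
  assert (HvZ : v x - g x <= v Z - g Z).
  { destruct HZ1 as [_ [HZR HZc]].
    pose proof (HR0 Z HZR).
    assert (K * atan ((Z - x) / wd) <= K * (PI / 2)).
    { apply Rmult_le_compat_l; [lra|]. pose proof (atan_bound ((Z - x) / wd)). lra. }
    unfold g at 2. lra. }
  assert (Hv : v x - g x <= v (x + h) - g (x + h)).
  { apply (super_incr H w mu v hsup hlsc g x (x + h) Z Hg Hx); try lra.
    intros z _. apply Hadm. }
  assert (Hginc : (sg - e') * h <= g (x + h) - g x).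
  { destruct (MVT_cor2 g (Derive g) x (x + h)) as [xi [Hxi1 Hxi2]]; [lra| |].
    - intros z _. apply is_derive_Reals. apply Derive_correct. apply (Hg z).
    - replace (x + h - x) with h in Hxi1 by ring. rewrite Hxi1.
      apply Rmult_le_compat_r; [lra|].
      rewrite HgD2.
      set (X := (xi - x) / wd).
      assert (HX0 : 0 <= X) by (unfold X; apply Rdiv_le_0_compat; lra).
      assert (HX1 : X <= t0).
      { unfold X. apply (Rmult_le_reg_r wd); [lra|]. unfold Rdiv. rewrite Rmult_assoc, Rinv_l by lra. lra. }
      assert (HXX : X ^ 2 <= e' / (M + 1)) by nra.
      assert (H1r : 1 - / (1 + X ^ 2) <= X ^ 2).
      { assert (0 <= X ^ 2) by apply pow2_ge_0.
        assert (/ (1 + X ^ 2) * (1 + X ^ 2) = 1) by (field; lra).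
        assert (0 < / (1 + X ^ 2)) by (apply Rinv_0_lt_compat; lra). nra. }
      assert (0 <= 1 - / (1 + X ^ 2)).
      { assert (0 <= X ^ 2) by apply pow2_ge_0. 
        assert (/ (1 + X ^ 2) <= 1) by (rewrite <- Rinv_1; apply Rinv_le_contravar; lra). lra. }
      assert (sg * (1 - / (1 + X ^ 2)) <= e').
      { assert (sg * (1 - / (1 + X ^ 2)) <= sg * X ^ 2) by (apply Rmult_le_compat_l; lra).
        assert (Hq : sg * X ^ 2 <= (M + 1) * (e' / (M + 1))) by (apply Rmult_le_compat; try (unfold sg; lra); apply pow2_ge_0).
        replace ((M + 1) * (e' / (M + 1))) with e' in Hq by (field; lra). lra. }
      assert (0 <= (1 - / (1 + X ^ 2)) * eps0) by nra.
      nra. }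
  assert (Hsgs : sg - e' = s - 2 * e') by (unfold sg, s; lra).
  nra.
Qed.

Lemma core {Omega} (H : R -> R -> Omega -> R) w L m mu1 mu u v c R0
  (HL : 0 < L) (HLip : forall p q y, Rabs (H p y w - H q y w) <= L * Rabs (p - q))
  (h5 : H5 H) (h6 : H6 H) (h3 : H3 H) (hm3 : forall eps, 0 < eps -> exists d, 0 < d /\ forall r, 0 <= r < d -> m r < eps)
  (hH4 : forall p x y, Rabs (H p y w - H p x w) <= m (Rabs (x - y) * (1 + Rabs p)))
  (Hmu : mu1 < mu) (H0 : forall y, H 0 y w <= mu1)
  (husc : forall x, usc_at u x) (hlsc : forall x, lsc_at v x)
  (hsub : visc_sub_on punctured H w mu u) (hu0 : u 0 <= 0)
  (hsup : visc_super_on punctured H w mu v) (hv0 : 0 <= v 0)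
  (Hc : 0 < c) (HR0 : forall y, R0 < y -> c * y <= v y) :
  forall y, 0 < y -> u y <= v y.
Proof.
  intros y Hy.
  destruct (h3 (mu + 1)) as [Rp HRp].
  set (M := Rabs Rp + 1).
  assert (HM : 0 < M) by (unfold M; pose proof (Rabs_pos Rp); lra).
  assert (HMx : forall x, mu < H M x w).
  { intro x. assert (Rp < Rabs M).
    { rewrite Rabs_right by lra. unfold M. pose proof (Rle_abs Rp). lra. }
    pose proof (HRp M H1 x w). lra. }
  assert (Key : forall e', 0 < e' -> e' <= 1 -> e' <= (mu - mu1) / L -> u y - v y <= 2 * e' * y).
  { intros e' He1 He2 He3.
    destruct (step H w L m mu1 mu u v c R0 HL HLip h5 h6 hm3 hH4 Hmu H0 husc hlsc hsub hsup Hc HR0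
                M HM HMx e' He1 He2 He3) as [h0 [Hh0 Hstep]].
    destruct (INR_unbounded (y / h0)) as [N HN].
    assert (HNpos : 0 < INR N).
    { assert (0 < y / h0) by (apply Rdiv_lt_0_compat; lra). lra. }
    set (h := y / INR N).
    assert (Hh : 0 < h) by (unfold h; apply Rdiv_lt_0_compat; lra).
    assert (Hhh : h <= h0).
    { unfold h. apply (Rmult_le_reg_r (INR N)); auto. unfold Rdiv. rewrite Rmult_assoc, Rinv_l by lra.
      rewrite Rmult_1_r.
      apply (Rmult_lt_compat_r h0) in HN; auto. unfold Rdiv in HN. rewrite Rmult_assoc, Rinv_l in HN by lra. lra. }
    assert (Hind : forall j, u (INR j * h) - v (INR j * h) <= 2 * e' * (INR j * h)).
    { induction j as [|j IH].
      - simpl. rewrite Rmult_0_l. lra.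
      - rewrite S_INR. replace ((INR j + 1) * h) with (INR j * h + h) by ring.
        assert (0 <= INR j * h) by (pose proof (pos_INR j); nra).
        pose proof (Hstep h (INR j * h) Hh Hhh H1). nra. }
    specialize (Hind N). replace (INR N * h) with y in Hind by (unfold h; field; lra). exact Hind. }
  assert (Hq : 0 < (mu - mu1) / L) by (apply Rdiv_lt_0_compat; lra).
  apply Rminus_le. apply le_epsilon. intros eps Heps.
  set (e' := Rmin (Rmin 1 ((mu - mu1) / L)) (eps / (2 * y))).
  assert (He : 0 < e' /\ e' <= 1 /\ e' <= (mu - mu1) / L /\ e' <= eps / (2 * y)).
  { unfold e'. pose proof (Rmin_l (Rmin 1 ((mu - mu1) / L)) (eps / (2 * y))).
    pose proof (Rmin_r (Rmin 1 ((mu - mu1) / L)) (eps / (2 * y))).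
    pose proof (Rmin_l 1 ((mu - mu1) / L)). pose proof (Rmin_r 1 ((mu - mu1) / L)).
    split; [|lra]. apply Rmin_pos; [apply Rmin_pos; lra|]. apply Rdiv_lt_0_compat; lra. }
  destruct He as [He1 [He2 [He3 He4]]].
  pose proof (Key e' He1 He2 He3).
  assert (2 * e' * y <= eps).
  { apply (Rmult_le_compat_l (2 * y)) in He4; [|lra].
    replace (2 * y * (eps / (2 * y))) with eps in He4 by (field; lra). lra. }
  lra.
Qed.

Lemma C1_refl phi : Defs.C1 phi -> Defs.C1 (fun z => phi (- z)) /\
  forall z, Derive (fun z => phi (- z)) z = - Derive phi (- z).
Proof.
  intro Hphi. apply C1_of.
  - intro z.
    assert (Hd : is_derive phi (- z) (Derive phi (- z))) by (apply Derive_correct; apply (Hphi (- z))).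
    pose proof (is_derive_comp phi (fun z => - z) z _ (-1) Hd) as Hc.
    assert (Hs : scal (-1) (Derive phi (- z)) = - Derive phi (- z)).
    { unfold scal; simpl; unfold mult; simpl. ring. }
    rewrite <- Hs. apply Hc. auto_derive; auto.
  - intro z.
    assert (Hc1 : continuous (fun z => Derive phi (- z)) z).
    { apply (@continuous_comp R_UniformSpace R_UniformSpace R_UniformSpace (fun z => - z) (Derive phi)).
      + apply (@continuous_opp R_UniformSpace R_AbsRing R_NormedModule (fun z => z)). apply continuous_id.
      + apply (Hphi (- z)). }
    exact (@continuous_opp R_UniformSpace R_AbsRing R_NormedModule (fun z => Derive phi (- z)) z Hc1).
Qed.

Lemma refl_sub {Omega} (H : R -> R -> Omega -> R) w mu u :
  visc_sub_on punctured H w mu u ->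
  visc_sub_on punctured (fun p y w => H (- p) (- y) w) w mu (fun z => u (- z)).
Proof.
  intros hsub phi x Hphi Hx [r [Hr Hloc]].
  destruct (C1_refl phi Hphi) as [Hpsi HD].
  pose proof (hsub (fun z => phi (- z)) (- x) Hpsi) as Hs.
  rewrite HD, Ropp_involutive in Hs. apply Hs.
  - unfold punctured in *. lra.
  - exists r. split; auto. intros y Hy.
    pose proof (Hloc (- y)). rewrite !Ropp_involutive in H0. simpl. rewrite Ropp_involutive. apply H0.
    replace (- y - x) with (- (y - - x)) by ring. rewrite Rabs_Ropp. auto.
Qed.

Lemma refl_super {Omega} (H : R -> R -> Omega -> R) w mu v :
  visc_super_on punctured H w mu v ->
  visc_super_on punctured (fun p y w => H (- p) (- y) w) w mu (fun z => v (- z)).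
Proof.
  intros hsup phi x Hphi Hx [r [Hr Hloc]].
  destruct (C1_refl phi Hphi) as [Hpsi HD].
  pose proof (hsup (fun z => phi (- z)) (- x) Hpsi) as Hs.
  rewrite HD, Ropp_involutive in Hs. apply Hs.
  - unfold punctured in *. lra.
  - exists r. split; auto. intros y Hy.
    pose proof (Hloc (- y)). rewrite !Ropp_involutive in H0. simpl. rewrite Ropp_involutive. apply H0.
    replace (- y - x) with (- (y - - x)) by ring. rewrite Rabs_Ropp. auto.
Qed.

Theorem proposition4p3 (Omega : Type) (H : R -> R -> Omega -> R)
  (hH1 : H1 H) (hH2 : H2 H) (hH3 : H3 H) (hH4 : H4 H) (hH5 : H5 H) (hH6 : H6 H)
  (w : Omega) (mu : R) (hmu : Rbar_lt (Atilde H w) (Finite mu))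
  (u v : R -> R)
  (hu_usc : forall x, usc_at u x) (hv_lsc : forall x, lsc_at v x)
  (hu : subsolution H w mu u) (hv : supersolution H w mu v)
  (hgrowth : liminf_growth_pos v) :
  forall y, y <> 0 -> u y <= v y.
Proof.
  intros y Hy.
  destruct hu as [hsub hu0]. destruct hv as [hsup hv0].
  destruct hH1 as [L0 HL0].
  set (L := Rabs L0 + 1).
  assert (HL : 0 < L) by (unfold L; pose proof (Rabs_pos L0); lra).
  assert (HLip : forall p q y w, Rabs (H p y w - H q y w) <= L * Rabs (p - q)).
  { intros p q y0 w0. eapply Rle_trans; [apply HL0|]. apply Rmult_le_compat_r; [apply Rabs_pos|].
    unfold L. pose proof (Rle_abs L0). lra. }
  destruct hH4 as [m [hm hH4']].
  assert (hm3 := proj2 (proj2 hm)).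
  assert (Hex : exists mu1, mu1 < mu /\ Atilde_set H w mu1).
  { apply NNPP; intro Hn.
    assert (Hlb : is_lb_Rbar (Atilde_set H w) (Finite mu)).
    { intros x Hx. simpl. apply Rnot_lt_le. intro Hlt. apply Hn. exists x. split; auto. }
    destruct (Glb_Rbar_correct (Atilde_set H w)) as [_ Hg].
    specialize (Hg _ Hlb). unfold Atilde in hmu.
    apply (Rbar_lt_not_le _ _ hmu). exact Hg. }
  destruct Hex as [mu1 [Hmu1 [f [Hf Hfs]]]].
  assert (H0 : forall y, H 0 y w <= mu1) by (apply (H0_bound H w mu1 m f hH6 hm (fun p x y => hH4' p x y w) Hf Hfs)).
  destruct hgrowth as [c [Hc [Ry HRy]]].
  destruct (Rlt_or_le 0 y) as [Hpos|Hneg].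
  - assert (HR0 : forall z, Rabs Ry < z -> c * z <= v z).
    { intros z Hz. pose proof (Rabs_pos Ry). assert (Hz2 : Ry < Rabs z).
      { pose proof (Rabs_pos Ry). rewrite (Rabs_right z) by lra. pose proof (Rle_abs Ry). lra. }
      pose proof (HRy z Hz2) as Hq. rewrite (Rabs_right z) in Hq by lra.
      apply (Rmult_le_compat_r z) in Hq; [|lra].
      unfold Rdiv in Hq. rewrite Rmult_assoc, Rinv_l in Hq by lra. lra. }
    exact (core H w L m mu1 mu u v c (Rabs Ry) HL (fun p q y => HLip p q y w) hH5 hH6 hH3 hm3
             (fun p x y => hH4' p x y w) Hmu1 H0 hu_usc hv_lsc hsub hu0 hsup hv0 Hc HR0 y Hpos).
  - set (H' := fun p y w => H (- p) (- y) w).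
    assert (Hy' : 0 < - y) by (lra).
    replace (u y) with ((fun z => u (- z)) (- y)) by (simpl; rewrite Ropp_involutive; auto).
    replace (v y) with ((fun z => v (- z)) (- y)) by (simpl; rewrite Ropp_involutive; auto).
    eapply (core H' w L m mu1 mu (fun z => u (- z)) (fun z => v (- z)) c (Rabs Ry) HL
      _ _ _ _ hm3 _ Hmu1 _ _ _ _ _ _ _ Hc _ (- y) Hy').
    Unshelve.
    + intros p q z. unfold H'. replace (p - q) with (- (- p - - q)) by ring. rewrite Rabs_Ropp. apply HLip.
    + intros z w0 p q t Ht. unfold H'.
      replace (- (t * p + (1 - t) * q)) with (t * - p + (1 - t) * - q) by ring. apply hH5; auto.
    + intros p z w0. unfold H'. rewrite Ropp_0. apply hH6.
    + intros M. destruct (hH3 M) as [Rp HRp]. exists Rp. intros p Hp z w0. unfold H'.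
      apply HRp. rewrite Rabs_Ropp. auto.
    + intros p x z. unfold H'. pose proof (hH4' (- p) (- x) (- z) w) as Hq.
      rewrite Rabs_Ropp in Hq. replace (- x - - z) with (- (x - z)) in Hq by ring. rewrite Rabs_Ropp in Hq. exact Hq.
    + intro z. unfold H'. rewrite Ropp_0. apply H0.
    + intros x eps Heps. destruct (hu_usc (- x) eps Heps) as [d [Hd Hd2]]. exists d. split; auto.
      intros z Hz. apply Hd2. replace (- z - - x) with (- (z - x)) by ring. rewrite Rabs_Ropp. auto.
    + intros x eps Heps. destruct (hv_lsc (- x) eps Heps) as [d [Hd Hd2]]. exists d. split; auto.
      intros z Hz. apply Hd2. replace (- z - - x) with (- (z - x)) by ring. rewrite Rabs_Ropp. auto.
    + apply refl_sub. auto.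
    + simpl. rewrite Ropp_0. auto.
    + apply refl_super. auto.
    + simpl. rewrite Ropp_0. auto.
    + intros z Hz. pose proof (Rabs_pos Ry). assert (Hz2 : Ry < Rabs (- z)).
      { rewrite Rabs_Ropp, (Rabs_right z) by lra. pose proof (Rle_abs Ry); lra. }
      pose proof (HRy (- z) Hz2) as Hq. rewrite Rabs_Ropp, (Rabs_right z) in Hq by lra.
      apply (Rmult_le_compat_r z) in Hq; [|lra].
      unfold Rdiv in Hq. rewrite Rmult_assoc, Rinv_l in Hq by lra. lra.
Qed.
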